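(* Let $n\geq 3$ and let $L^B$ be a blow-up of the Boolean lattice $L\cong\mathbf{2}^n$ such that $L^B\cong L\cong\mathbf{2}^n$ (i.e. every replacing chain has exactly one element). Then $G^c(L^B)_{SR}=G(L^B)$.
   Context: Blow-up: keep $0,1$ of $L=\mathbf{2}^n$ and replace every $x\in L\setminus\{0,1\}$ by a finite nonempty chain $C_x$, ordered by the chain order within $C_x$ and, for $a\in C_x,b\in C_y$, $x\neq y$, by $a\leq b$ iff $x\leq y$ in $L$. $Z^*(M)$ is the set of nonzero $a$ with $a\wedge b=0$ for some $b\neq0$. $G(M)$ (zero-divisor graph) has vertex set $Z^*(M)$, distinct $a,b$ adjacent iff $a\wedge b=0$; $G^c(M)$ is its complement on the same vertex set. In a connected graph, $u$ is maximally distant from $v$ if $d(v,w)\leq d(u,v)$ for all neighbours $w$ of $u$; mutually maximally distant means each is maximally distant from the other. $G_{SR}$ has as vertices those $u$ mutually maximally distant from some $v$, distinct vertices adjacent iff mutually maximally distant in $G$. *)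

(* Defs.v *)
From mathcomp Require Import all_boot.
Set Implicit Arguments. Unset Strict Implicit. Unset Printing Implicit Defensive.

(* k x is the length of the chain C_x replacing x (for x <> 0,1);
   0 = set0 and 1 = setT are kept (chains of length 1). *)
Definition csize (n : nat) (k : {set 'I_n} -> nat) (x : {set 'I_n}) : nat :=
  if (x == set0) || (x == setT) then 1 else k x.

(* element a = (x, i) : the i-th element of the chain C_x *)
Definition blowup (n : nat) (k : {set 'I_n} -> nat) : finType :=
  {x : {set 'I_n} & 'I_(csize k x)}.

Definition bu_le (n : nat) (k : {set 'I_n} -> nat) (a b : @blowup n k) : bool :=
  ((tag a == tag b) && (val (tagged a) <= val (tagged b))%N)
  || (tag a \proper tag b).

Definition bu_zero (n : nat) (k : {set 'I_n} -> nat) (a : @blowup n k) : bool := tag a == set0.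

Definition bu_meet0 (n : nat) (k : {set 'I_n} -> nat) (a b : @blowup n k) : bool :=
  [forall c, bu_le c a ==> bu_le c b ==> bu_zero c].

Definition bu_Zstar (n : nat) (k : {set 'I_n} -> nat) (a : @blowup n k) : bool :=
  ~~ bu_zero a && [exists b, ~~ bu_zero b && bu_meet0 a b].

Section Graphs.
Variables (T : finType) (V : pred T) (e : rel T).

Fixpoint walkb (m : nat) (u v : T) : bool :=
  if m is m'.+1 then [exists w, [&& V w, e u w & walkb m' w v]] else u == v.

(* graph distance: least m with a walk of length m (= #|T| if none) *)
Definition dist (u v : T) : nat := find (fun m => walkb m u v) (iota 0 #|T|).

Definition maxdist (u v : T) : Prop :=
  forall w, V w -> e u w -> (dist v w <= dist u v)%N.

Definition mmd (u v : T) : Prop := V u /\ V v /\ maxdist u v /\ maxdist v u.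

Definition SR_vertex (u : T) : Prop := exists v, mmd u v.
Definition SR_edge (u v : T) : Prop := u <> v /\ mmd u v.
End Graphs.

Definition G_edge (n : nat) (k : {set 'I_n} -> nat) (a b : @blowup n k) : bool := (a != b) && bu_meet0 a b.
Definition Gc_edge (n : nat) (k : {set 'I_n} -> nat) (a b : @blowup n k) : bool := (a != b) && ~~ bu_meet0 a b.

(* Main.v *)
Require Import Defs.
From mathcomp Require Import all_boot.
Set Implicit Arguments. Unset Strict Implicit. Unset Printing Implicit Defensive.

Section Dist.
Variables (T : finType) (V : pred T) (e : rel T).

Lemma walkb1 u v : walkb V e 1 u v = V v && e u v.
Proof.
apply/existsP/andP => [[w /and3P[Vw euw /eqP <-]]|[Vv euv]]; first by [].
by exists v; rewrite Vv euv eqxx.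
Qed.

Lemma dist_le m u v : walkb V e m u v -> dist V e u v <= m.
Proof.
rewrite /dist => W; case: (ltnP m #|T|) => hm.
  rewrite leqNgt; apply/negP => lt; have := before_find 0 lt.
  by rewrite nth_iota // add0n W.
by apply: leq_trans (find_size _ _) _; rewrite size_iota.
Qed.

Lemma dist_walk u v : dist V e u v < #|T| -> walkb V e (dist V e u v) u v.
Proof.
rewrite /dist => h.
have hs : has (fun m => walkb V e m u v) (iota 0 #|T|) by rewrite has_find size_iota.
by have := nth_find 0 hs; rewrite nth_iota // add0n.
Qed.

Lemma dist_pos u v : u != v -> 0 < dist V e u v.
Proof.
move=> uv; rewrite lt0n; apply/negP => /eqP h.
have hc : 0 < #|T| by apply/card_gt0P; exists u.
have := @dist_walk u v; rewrite h hc /= => /(_ isT) /eqP huv.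
by rewrite huv eqxx in uv.
Qed.

Lemma dist_ge2 u v : u != v -> ~~ walkb V e 1 u v -> 1 < dist V e u v.
Proof.
move=> uv nw; rewrite ltnNge; apply/negP => h.
have hc : 1 < #|T| by apply/card_gt1P; exists u, v.
have := dist_walk (leq_ltn_trans h hc).
move: h; case: (dist V e u v) => [|[|d]] //= _.
  by move/eqP => huv; rewrite huv eqxx in uv.
by move=> w1; apply: (negP nw); exact: w1.
Qed.
End Dist.

Section BU.
Variables (n : nat) (k : {set 'I_n} -> nat).
Hypothesis hn : (3 <= n)%N.
Hypothesis hk : forall x : {set 'I_n}, x != set0 -> x != setT -> k x = 1%N.
Local Notation B := (@blowup n k).

Lemma csize1 x : csize k x = 1.
Proof. by rewrite /csize; case: ifP => // /norP [h1 h2]; exact: hk. Qed.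

Definition mk (x : {set 'I_n}) : B :=
  existT (fun x => 'I_(csize k x)) x (cast_ord (esym (csize1 x)) ord0).

Lemma tag_mk x : tag (mk x) = x. Proof. by []. Qed.

Lemma tagged0 (a : B) : val (tagged a) = 0.
Proof. by case: a => x i /=; move: (leq_trans (ltn_ord i) (eq_leq (csize1 x))); rewrite ltnS leqn0 => /eqP. Qed.

Lemma tag_inj (a b : B) : tag a = tag b -> a = b.
Proof.
case: a => x i; case: b => y j /= exy; subst y; congr existT; apply: val_inj.
by move: (leq_trans (ltn_ord i) (eq_leq (csize1 x))) (leq_trans (ltn_ord j) (eq_leq (csize1 x))); rewrite !ltnS !leqn0 => /eqP hi /eqP hj; rewrite /= hi hj.
Qed.

Lemma eqBE (a b : B) : (a == b) = (tag a == tag b).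
Proof. by apply/eqP/eqP => [->|/tag_inj]. Qed.

Lemma leE (a b : B) : bu_le a b = (tag a \subset tag b).
Proof.
rewrite /bu_le !tagged0 leqnn andbT.
case: (eqVneq (tag a) (tag b)) => [->|ne]; first by rewrite subxx.
by rewrite /= properEneq ne.
Qed.

Lemma meet0E (a b : B) : bu_meet0 a b = (tag a :&: tag b == set0).
Proof.
apply/forallP/eqP.
  move=> H; apply/setP => i; rewrite !inE; apply/negP => /andP[ia ib].
  have := H (mk [set i]); rewrite !leE /bu_zero tag_mk !sub1set ia ib /=.
  by move/eqP/setP/(_ i); rewrite !inE eqxx.
move=> H c; apply/implyP => ca; apply/implyP => cb; rewrite /bu_zero.
by rewrite -subset0 -H subsetI -!leE ca cb.
Qed.

Lemma ZE (a : B) : bu_Zstar a = (tag a != set0) && (tag a != setT).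
Proof.
rewrite /bu_Zstar /bu_zero; case: (eqVneq (tag a) set0) => //= ha.
apply/existsP/idP.
  case=> b /andP[hb]; rewrite meet0E => /eqP hab; apply/eqP => hT.
  by move: hab; rewrite hT setTI => hb0; rewrite hb0 eqxx in hb.
move=> hT; exists (mk (~: tag a)); rewrite meet0E tag_mk setICr eqxx andbT.
apply/eqP => h; move/eqP: hT; apply; by rewrite -(setCK (tag a)) h setC0.
Qed.

Lemma GcE (a b : B) : Gc_edge a b = (tag a != tag b) && (tag a :&: tag b != set0).
Proof. by rewrite /Gc_edge meet0E eqBE. Qed.

Lemma pair_proper (i j : 'I_n) : [set i; j] != setT.
Proof.
apply/eqP => h; have := cards2 i j; rewrite h cardsT card_ord => hn'.
by move: hn; rewrite hn'; case: (i != j).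
Qed.

Lemma memN0 (x : 'I_n) (A : {set 'I_n}) : x \in A -> A != set0.
Proof. by move=> xA; apply/set0Pn; exists x. Qed.

Lemma memNeq (x : 'I_n) (A C : {set 'I_n}) : x \in A -> x \notin C -> A != C.
Proof. by move=> xA xC; apply/eqP => h; rewrite h in xA; rewrite xA in xC. Qed.

Lemma memNeq' (x : 'I_n) (A C : {set 'I_n}) : x \notin A -> x \in C -> A != C.
Proof. by move=> xA xC; rewrite eq_sym; exact: memNeq xC xA. Qed.

Local Notation V := (@bu_Zstar n k).
Local Notation e := (@Gc_edge n k).

Lemma notin_of_disj (A C : {set 'I_n}) i : A :&: C = set0 -> i \in A -> i \notin C.
Proof. by move=> h iA; apply/negP => iC; move/setP/(_ i): h; rewrite !inE iA iC. Qed.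

Lemma diam (a b : B) : V a -> V b -> dist V e a b <= 2.
Proof.
case: (eqVneq (tag a) (tag b)) => [/tag_inj ->|ne] Za Zb.
  by apply: leq_trans (@dist_le _ V e 0 b b _) _ => //=.
case: (eqVneq (tag a :&: tag b) set0) => hI; last first.
  by apply: leq_trans (@dist_le _ V e 1 a b _) _ => //; rewrite walkb1 Zb GcE ne hI.
move: (Za) (Zb); rewrite !ZE => /andP[/set0Pn[i ia] _] /andP[/set0Pn[j jb] _].
have ib := notin_of_disj hI ia.
have ja : j \notin tag a by apply: notin_of_disj jb; rewrite setIC.
have ii : i \in [set i; j] by rewrite !inE eqxx.
have jj : j \in [set i; j] by rewrite !inE eqxx orbT.
have Zw : V (mk [set i; j]) by rewrite ZE tag_mk (memN0 ii) pair_proper.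
have ew : e a (mk [set i; j]).
  by rewrite GcE tag_mk (memNeq' ja jj) (memN0 (x := i)) // inE ia ii.
have w1 : walkb V e 1 (mk [set i; j]) b.
  by rewrite walkb1 Zb GcE tag_mk (memNeq ii ib) (memN0 (x := j)) // inE jj jb.
apply: dist_le; apply/existsP; exists (mk [set i; j]); apply/and3P; split => //.
Qed.

Lemma dist2 (a b : B) : V a -> V b -> tag a :&: tag b = set0 -> 1 < dist V e a b.
Proof.
move=> Za Zb hI; apply: dist_ge2.
  rewrite eqBE; move: Za; rewrite ZE => /andP[/set0Pn[i ia] _].
  exact: memNeq ia (notin_of_disj hI ia).
by rewrite walkb1 GcE hI eqxx !andbF.
Qed.

Lemma not_maxdist (a b : B) : V a -> V b -> tag a :&: tag b != set0 ->
  ~~ (tag a \subset tag b) -> ~ maxdist V e a b.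
Proof.
move=> Za Zb hI nsub H.
case/set0Pn: hI => i; rewrite inE => /andP[ia ib].
have /set0Pn[j jD] : tag a :\: tag b != set0 by rewrite setD_eq0.
have iD : i \notin tag a :\: tag b by rewrite inE ib.
have Zw : V (mk (tag a :\: tag b)).
  by rewrite ZE tag_mk (memN0 jD) (memNeq' iD (in_setT i)).
have ew : e a (mk (tag a :\: tag b)).
  rewrite GcE tag_mk (memNeq ia iD) (memN0 (x := j)) //.
  by move: jD; rewrite !inE => /andP[-> ->].
have := H _ Zw ew.
have h1 : dist V e a b <= 1.
  apply: dist_le; rewrite walkb1 Zb GcE (memN0 (x := i)) ?andbT; last by rewrite inE ia ib.
  by apply/eqP => h; rewrite h subxx in nsub.
have h2 : 1 < dist V e b (mk (tag a :\: tag b)).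
  apply: dist2 => //; rewrite tag_mk; apply/setP => z; rewrite !inE.
  by case: (z \in tag b); rewrite ?andbF.
move=> h3; have := leq_ltn_trans (leq_trans h3 h1) h2; by rewrite ltnn.
Qed.

Lemma maxdist_self (a : B) : V a -> ~ maxdist V e a a.
Proof.
move=> Za H; move: (Za); rewrite ZE => /andP[/set0Pn[i ia] nT].
have /set0Pn[j] : ~: tag a != set0.
  by apply/eqP => h; move/eqP: nT; apply; rewrite -(setCK (tag a)) h setC0.
rewrite inE => ja.
have ii : i \in [set i; j] by rewrite !inE eqxx.
have jj : j \in [set i; j] by rewrite !inE eqxx orbT.
have Zw : V (mk [set i; j]) by rewrite ZE tag_mk (memN0 ii) pair_proper.
have ew : e a (mk [set i; j]).
  by rewrite GcE tag_mk (memNeq' ja jj) (memN0 (x := i)) // inE ia ii.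
have := H _ Zw ew.
have h1 : dist V e a a <= 0 by apply: dist_le => /=.
have h2 : 0 < dist V e a (mk [set i; j]).
  by apply: dist_pos; rewrite eqBE tag_mk (memNeq' ja jj).
move=> h3; have := leq_trans h2 (leq_trans h3 h1); by rewrite ltnn.
Qed.

Lemma mmdE (a b : B) :
  mmd V e a b <-> [/\ V a, V b & tag a :&: tag b == set0].
Proof.
split.
  case=> Va [Vb [m1 m2]]; split => //; apply/negPn/negP => hI.
  case: (eqVneq (tag a) (tag b)) => [/tag_inj eab|ne].
    by subst; exact: maxdist_self Va m1.
  case: (boolP (tag a \subset tag b)) => sab; last exact: not_maxdist Va Vb hI sab m1.
  apply: (not_maxdist Vb Va _ _ m2); first by rewrite setIC.
  by apply/negP => sba; move/eqP: ne; apply; apply/eqP; rewrite eqEsubset sab sba.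
case=> Va Vb /eqP hI; split => //; split => //; split => w Vw _.
  exact: leq_trans (diam Vb Vw) (dist2 Va Vb hI).
by apply: leq_trans (diam Va Vw) (dist2 Vb Va _); rewrite setIC.
Qed.

Lemma main :
  (forall u : B, SR_vertex V e u <-> bu_Zstar u) /\
  (forall u v : B, SR_edge V e u v <-> [/\ bu_Zstar u, bu_Zstar v & G_edge u v]).
Proof.
split.
  move=> u; split; first by case=> v [].
  move=> Zu; exists (mk (~: tag u)); apply/mmdE; split => //; last by rewrite tag_mk setICr.
  move: Zu; rewrite !ZE tag_mk => /andP[h0 hT]; apply/andP; split.
    by apply/eqP => h; move/eqP: hT; apply; rewrite -(setCK (tag u)) h setC0.
  by apply/eqP => h; move/eqP: h0; apply; rewrite -(setCK (tag u)) h setCT.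
move=> u v; rewrite /SR_edge /G_edge meet0E; split.
  by case=> uv /mmdE[Zu Zv hI]; split => //; rewrite hI andbT; exact/eqP.
by case=> Zu Zv /andP[uv hI]; split; [exact/eqP | apply/mmdE; split].
Qed.
End BU.

Theorem corollary3p17 (n : nat) (k : {set 'I_n} -> nat) :
  (3 <= n)%N ->
  (forall x : {set 'I_n}, x != set0 -> x != setT -> k x = 1%N) ->
  (forall u : @blowup n k,
      SR_vertex (@bu_Zstar n k) (@Gc_edge n k) u <-> bu_Zstar u) /\
  (forall u v : @blowup n k,
      SR_edge (@bu_Zstar n k) (@Gc_edge n k) u v <->
      [/\ bu_Zstar u, bu_Zstar v & G_edge u v]).
Proof. move=> hn hk; exact: main hn hk. Qed.
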